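(* Let $b>0$ and let $f\in C^2(\mathbb{R}^+)$ with $f(x)\ge0$, and set $\lambda_{n,b}=2\int_0^\infty\phi_n(bx)f(x)\,\mathrm{d}x$ for $n\in\mathbb{N}^\star$ (i.e. $\lambda_{n,b}=2\int_0^\infty\phi_n(bx)\frac{\mathrm{d}\mu(x)}{x}$ with $\mathrm{d}\mu(x)=xf(x)\,\mathrm{d}x$), where $\phi_n(x)=\int_0^\pi e^{-2x\sin\eta}e^{2in\eta}\,\mathrm{d}\eta$. Assume there is a constant $C>0$ such that (1) $\limsup_{x\to0^+}x|f(x)|+\limsup_{x\to0^+}x^2|f'(x)|\le C$; (2) $\lim_{x\to+\infty}f(x)=0$ and $\lim_{x\to+\infty}xf'(x)=0$; (3) $f''(x)\ge0$ for all $x>0$. Then $\lambda_{n+1,b}+\lambda_{n-1,b}-2\lambda_{n,b}\ge0$ for all $n\ge2$. *)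

(* Defs.v *)
From Stdlib Require Import Reals.
From Coquelicot Require Import Coquelicot.
Open Scope R_scope.

Definition cexpi (t : R) : C := (cos t, sin t).

Definition phi (n : nat) (x : R) : C :=
  RInt (V := C_R_CompleteNormedModule)
    (fun eta => Cmult (RtoC (exp (-2 * x * sin eta))) (cexpi (2 * INR n * eta))) 0 PI.

(* lambda_{n,b} = 2 \int_0^\infty phi_n(b x) f(x) dx, as an improper integral
   over ]0,+oo[ (limits at 0+ and at +oo); [lam_is f b n l] says the integral
   converges with value l. *)
Definition lam_is (f : R -> R) (b : R) (n : nat) (l : C) : Prop :=
  is_RInt_gen (V := C_R_NormedModule)
    (fun x => Cmult (RtoC (2 * f x)) (phi n (b * x)))
    (at_right 0) (Rbar_locally p_infty) l.

Definition limsup_right0 (g : R -> R) : Rbar :=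
  Glb_Rbar (fun M : R => exists delta : R, 0 < delta /\
     Finite M = Lub_Rbar (fun y => exists x, 0 < x < delta /\ y = g x)).

(* Main.v *)
Require Import Defs.
From Stdlib Require Import Reals.
From Coquelicot Require Import Coquelicot.
Open Scope R_scope.
From Stdlib Require Import Lra Lia.


Lemma cont2_comp (h : R -> R) (f : R -> R -> R) x y :
  continuity_pt h (f x y) -> continuity_2d_pt f x y ->
  continuity_2d_pt (fun u v => h (f u v)) x y.
Proof.
  intros Hh Hf. apply continuity_2d_pt_filterlim.
  apply continuity_2d_pt_filterlim in Hf. apply continuity_pt_filterlim in Hh.
  eapply filterlim_comp; eauto.
Qed.

Lemma cont_exp x : continuity_pt exp x.
Proof. apply derivable_continuous_pt, derivable_pt_exp. Qed.
Lemma cont_sin x : continuity_pt sin x.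
Proof. apply continuity_sin. Qed.
Lemma cont_cos x : continuity_pt cos x.
Proof. apply continuity_cos. Qed.
Lemma cont_pow k x : continuity_pt (fun z => z ^ k) x.
Proof. apply derivable_continuous_pt, derivable_pt_pow. Qed.

Ltac cont2 :=
  first
  [ apply continuity_2d_pt_id1
  | apply continuity_2d_pt_id2
  | apply continuity_2d_pt_const
  | apply continuity_2d_pt_mult; cont2
  | apply continuity_2d_pt_plus; cont2
  | apply continuity_2d_pt_minus; cont2
  | apply continuity_2d_pt_opp; cont2
  | apply (cont2_comp exp); [apply cont_exp | cont2]
  | apply (cont2_comp sin); [apply cont_sin | cont2]
  | apply (cont2_comp cos); [apply cont_cos | cont2]
  | apply (cont2_comp (fun z => z ^ _)); [apply cont_pow | cont2]
  | apply continuity_2d_pt_inv; [cont2 | ]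
  ].

Goal forall x y, 0 < x -> continuity_2d_pt (fun u v => x ^ 3 * exp (- (u * sin v)) * cos (2 * v - (/u + u) / 2)) x y.
intros. cont2. lra. Qed.

Lemma param_deriv (G dG : R -> R -> R) (x a b : R) :
  a <= b ->
  locally x (fun y => forall t, is_derive (fun z => G z t) y (dG y t)) ->
  (forall t, a <= t <= b -> continuity_2d_pt dG x t) ->
  (forall y t, continuity_pt (G y) t) ->
  is_derive (fun y => RInt (G y) a b) x (RInt (dG x) a b).
Proof.
  intros Hab Hd Hc HG.
  assert (E : RInt (dG x) a b = RInt (fun t => Derive (fun u => G u t) x) a b).
  { apply RInt_ext. intros t _. symmetry. apply is_derive_unique.
    apply (locally_singleton _ _ Hd). }
  rewrite E.
  apply (is_derive_RInt_param G a b x).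
  - eapply filter_imp; [|exact Hd]. intros y Hy t _. eexists. apply Hy.
  - intros t Ht. rewrite Rmin_left in Ht by lra. rewrite Rmax_right in Ht by lra.
    apply continuity_2d_pt_ext_loc with (f := dG); [|now apply Hc].
    destruct Hd as [eps Heps].
    exists eps. intros u v Hu Hv. symmetry. apply is_derive_unique. apply Heps. exact Hu.
  - apply filter_forall. intros y. apply (ex_RInt_continuous (V:=R_CompleteNormedModule)). intros z _.
    apply continuity_pt_filterlim. apply HG.
Qed.


Definition aa r := (r + /r)/2.
Definition cc r := (/r - r)/2.
Definition GA u N M r t := r ^ (S N) * exp (- (u * aa r * sin t)) * cos (2*M*t - u * cc r * cos t).
Definition KA u N M r t := r ^ N * exp (- (u * aa r * sin t)) * sin (2*M*t - u * cc r * cos t).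
Definition dGA u N M r t := r ^ N * exp (- (u * aa r * sin t)) *
  (- (u * aa r * cos t) * sin (2*M*t - u * cc r * cos t) +
   cos (2*M*t - u * cc r * cos t) * (2*M + u * cc r * sin t)).

Lemma dKA u N M r t : is_derive (KA u N M r) t (dGA u N M r t).
Proof.
  unfold KA, dGA. auto_derive; auto. unfold Rminus. ring.
Qed.

Lemma dGA_r u N M r t : INR (S N) = 2 * M -> r <> 0 ->
  is_derive (fun z => GA u N M z t) r (dGA u N M r t).
Proof.
  intros HM Hr. unfold GA, dGA, aa, cc. auto_derive.
  { repeat split; auto. }
  replace (match N with | 0%nat => 1 | S _ => INR N + 1 end) with (2*M) by (rewrite <- HM; reflexivity).
  unfold Rminus, Rdiv. field. auto.
Qed.


Lemma cont_of_deriv (g : R -> R) x : ex_derive g x -> continuity_pt g x.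
Proof. intros H. apply continuity_pt_filterlim. apply (ex_derive_continuous (V:=R_NormedModule)). exact H. Qed.

Lemma A_deriv u N M r : INR (S N) = 2 * M -> 0 < r ->
  is_derive (fun z => RInt (GA u N M z) 0 PI) r (RInt (dGA u N M r) 0 PI).
Proof.
  intros HM Hr.
  apply param_deriv.
  - pose proof PI_RGT_0; lra.
  - assert (Hp : 0 < r / 2) by lra.
    exists (mkposreal _ Hp). intros y Hy t. apply dGA_r; auto.
    cbn in Hy. unfold AbsRing_ball, abs, minus, plus, opp in Hy; simpl in Hy.
    apply Rabs_def2 in Hy. lra.
  - intros t _. unfold dGA, aa, cc. cont2; lra.
  - intros y t. apply cont_of_deriv. unfold GA. auto_derive. auto.
Qed.

Lemma A_deriv_val u N n r : INR (S N) = 2 * INR n ->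
  RInt (dGA u N (INR n) r) 0 PI = 2 * r ^ N * sin (u * cc r).
Proof.
  intros HM.
  rewrite (is_RInt_unique _ 0 PI (minus (KA u N (INR n) r PI) (KA u N (INR n) r 0))).
  - unfold KA, minus, plus, opp; simpl. rewrite sin_PI, cos_PI, sin_0, cos_0.
    replace (2 * INR n * PI - u * cc r * -1) with (u * cc r + 2 * INR n * PI) by ring.
    rewrite sin_period.
    replace (2 * INR n * 0 - u * cc r * 1) with (- (u * cc r)) by ring.
    rewrite sin_neg. rewrite !Rmult_0_r, Ropp_0, exp_0. ring.
  - apply (is_RInt_derive (V:=R_CompleteNormedModule)).
    + intros x _. apply dKA.
    + intros x _. apply (ex_derive_continuous (V:=R_NormedModule)).
      unfold dGA. auto_derive. auto.
Qed.

Lemma exp_le1 x : x <= 0 -> exp x <= 1.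
Proof. intros H. destruct (Req_dec x 0) as [->|E]; [rewrite exp_0; lra|].
  rewrite <- exp_0. left. apply exp_increasing. lra. Qed.

Lemma Rabs_cos_le1 x : Rabs (cos x) <= 1.
Proof. apply Rabs_le. apply COS_bound. Qed.
Lemma Rabs_sin_le1 x : Rabs (sin x) <= 1.
Proof. apply Rabs_le. apply SIN_bound. Qed.

Lemma INR_pos_S k : 0 < INR (S k).
Proof. apply lt_0_INR. lia. Qed.

Lemma keyA p u : 0 <= u ->
  RInt (fun t => exp (-(u * sin t)) * cos (2 * INR (S p) * t)) 0 PI
  <= u * (/ INR (S (2*p)) - / INR (S (S (S (2*p))))).
Proof.
  intros Hu.
  set (N := S (2 * p)).
  assert (HM : INR (S N) = 2 * INR (S p)).
  { unfold N. rewrite !S_INR, mult_INR. simpl. ring. }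
  assert (HN : 0 < INR N) by apply INR_pos_S.
  assert (HN2 : 0 < INR (S (S N))) by apply INR_pos_S.
  set (L := fun r => u * (r ^ N / INR N - r ^ (S (S N)) / INR (S (S N)))).
  set (D := fun r => RInt (GA u N (INR (S p)) r) 0 PI - L r).
  set (dD := fun r => 2 * r ^ N * (sin (u * cc r) - u * cc r)).
  assert (HdD : forall r, 0 < r -> is_derive D r (dD r)).
  { intros r Hr.
    assert (HL : is_derive L r (u * (r ^ (2 * p) - r ^ (S N)))).
    { unfold L. auto_derive. auto.
      unfold N. simpl.
      replace (match (p + (p + 0))%nat with
               | 0%nat => 1 | S _ => INR (p + (p + 0)) + 1 end)
        with (INR (S (p + (p+0)))) by reflexivity.
      pose proof (INR_pos_S (p+(p+0))) as Hq. set (q := INR (S (p + (p + 0)))) in *. set (w := r ^ (p + (p + 0))). match goal with |- ?a = ?b => change (@eq R a b) end. field. lra. }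
    unfold D, dD.
    replace (2 * r ^ N * (sin (u * cc r) - u * cc r))
      with (RInt (dGA u N (INR (S p)) r) 0 PI - u * (r ^ (2 * p) - r ^ (S N))).
    - apply (is_derive_minus (K:=R_AbsRing) (V:=R_NormedModule)); [apply A_deriv; auto | exact HL].
    - rewrite A_deriv_val by exact HM. unfold cc, N. simpl. field. lra. }
  assert (Hmono : forall r, 0 < r <= 1 -> D 1 <= D r).
  { intros r Hr. destruct (Req_dec r 1) as [->|Hr1]; [lra|].
    destruct (MVT_gen D r 1 dD) as [c [Hc Heq]].
    - intros x Hx. rewrite Rmin_left, Rmax_right in Hx by lra. apply HdD. lra.
    - intros x Hx. rewrite Rmin_left, Rmax_right in Hx by lra.
      apply cont_of_deriv. eexists. apply HdD. lra.
    - rewrite Rmin_left, Rmax_right in Hc by lra.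
      assert (dD c <= 0).
      { unfold dD. assert (0 <= u * cc c).
        { unfold cc. apply Rmult_le_pos; auto.
          assert (c <= / c).
          { apply Rle_trans with 1; [lra|]. rewrite <- Rinv_1.
            apply Rinv_le_contravar; lra. }
          lra. }
        assert (sin (u * cc c) <= u * cc c).
        { destruct (Req_dec (u * cc c) 0) as [E|E].
          - rewrite E, sin_0. lra.
          - left. apply sin_lt_x. lra. }
        assert (0 <= c ^ N) by (apply pow_le; lra).
        assert (0 <= 2 * c ^ N) by lra.
        nra. }
      nra. }
  assert (Hpow : forall k r, 0 <= r <= 1 -> 0 <= r ^ k <= 1).
  { induction k; intros r Hr; simpl; [lra|]. specialize (IHk r Hr). nra. }
  assert (Hbound : forall r, 0 < r <= 1 -> D r <= (PI + 2 * u) * r).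
  { intros r Hr. unfold D.
    assert (HA : Rabs (RInt (GA u N (INR (S p)) r) 0 PI) <= (PI - 0) * r ^ (S N)).
    { apply abs_RInt_le_const.
      - pose proof PI_RGT_0; lra.
      - apply (ex_RInt_continuous (V:=R_CompleteNormedModule)). intros z _.
        apply (ex_derive_continuous (V:=R_NormedModule)). unfold GA. auto_derive. auto.
      - intros t Ht. unfold GA. rewrite !Rabs_mult.
        assert (Hs : 0 <= sin t) by (apply sin_ge_0; lra).
        assert (Ha : 0 < aa r).
        { unfold aa. assert (0 < / r) by (apply Rinv_0_lt_compat; lra). lra. }
        assert (He : Rabs (exp (- (u * aa r * sin t))) <= 1).
        { rewrite Rabs_pos_eq by (left; apply exp_pos).
          apply exp_le1. assert (0 <= u * aa r * sin t).
          { apply Rmult_le_pos; [apply Rmult_le_pos|]; lra. } lra. }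
        assert (Hc : Rabs (cos (2 * INR (S p) * t - u * cc r * cos t)) <= 1) by apply Rabs_cos_le1.
        destruct (Hpow (S N) r ltac:(lra)).
        rewrite (Rabs_pos_eq (r ^ S N)) by lra.
        assert (0 <= Rabs (exp (- (u * aa r * sin t)))) by apply Rabs_pos.
        assert (0 <= Rabs (cos (2 * INR (S p) * t - u * cc r * cos t))) by apply Rabs_pos.
        rewrite Rmult_assoc. rewrite <- (Rmult_1_r (r ^ S N)) at 2. apply Rmult_le_compat_l; [lra|]. rewrite <- (Rmult_1_r 1). apply Rmult_le_compat; lra. }
    assert (Hfrac : forall k, 0 <= r ^ S k / INR (S k) <= r).
    { intros k. destruct (Hpow k r ltac:(lra)).
      assert (H1 : 1 <= INR (S k)) by (rewrite S_INR; pose proof (pos_INR k); lra).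
      assert (0 < / INR (S k) <= 1).
      { split; [apply Rinv_0_lt_compat; lra|]. rewrite <- Rinv_1. apply Rinv_le_contravar; lra. }
      unfold Rdiv. change (r ^ S k) with (r * r ^ k). split; [apply Rmult_le_pos; [apply Rmult_le_pos|]; lra|].
      rewrite Rmult_assoc. apply Rle_trans with (r * 1); [|lra]. apply Rmult_le_compat_l; [lra|].
      rewrite <- (Rmult_1_r 1). apply Rmult_le_compat; lra. }
    assert (HL : Rabs (L r) <= u * r).
    { unfold L. rewrite Rabs_mult, Rabs_pos_eq by lra. apply Rmult_le_compat_l; [lra|].
      unfold N. pose proof (Hfrac (2 * p)%nat). pose proof (Hfrac (S (S (2 * p)))).
      apply Rabs_le. lra. }
    assert (r ^ S N <= r).
    { destruct (Hpow N r ltac:(lra)). change (r ^ S N) with (r * r ^ N). nra. }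
    pose proof (Rle_abs (RInt (GA u N (INR (S p)) r) 0 PI)).
    pose proof (Rle_abs (- L r)). rewrite Rabs_Ropp in *.
    pose proof PI_RGT_0. nra. }
  assert (HD1 : D 1 <= 0).
  { destruct (Rle_lt_dec (D 1) 0) as [|Hpos]; [assumption|exfalso].
    pose proof PI_RGT_0.
    set (r := Rmin 1 (D 1 / (2 * (PI + 2 * u)))).
    assert (Hr0 : 0 < r).
    { unfold r. apply Rmin_glb_lt; [lra|]. apply Rdiv_lt_0_compat; lra. }
    assert (Hr1 : r <= 1) by apply Rmin_l.
    assert (Hr2 : r <= D 1 / (2 * (PI + 2 * u))) by apply Rmin_r.
    pose proof (Hmono r (conj Hr0 Hr1)). pose proof (Hbound r (conj Hr0 Hr1)).
    assert ((PI + 2 * u) * r <= D 1 / 2).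
    { apply Rle_trans with ((PI + 2 * u) * (D 1 / (2 * (PI + 2 * u)))).
      - apply Rmult_le_compat_l; lra.
      - right. field. lra. }
    lra. }
  unfold D, L in HD1.
  rewrite (RInt_ext _ (fun t => exp (-(u * sin t)) * cos (2 * INR (S p) * t))) in HD1.
  2:{ intros t _. unfold GA, aa, cc. rewrite pow1, Rinv_1.
      replace ((1 + 1) / 2) with 1 by field. replace ((1 - 1) / 2) with 0 by field.
      rewrite !Rmult_1_r, Rmult_0_r, Rmult_0_l, Rminus_0_r, Rmult_1_l. reflexivity. }
  rewrite !pow1 in HD1. unfold N in HD1. unfold Rdiv in HD1. rewrite !Rmult_1_l in HD1. unfold N. lra.
Qed.


Definition psiw (w : R -> R) (u : R) := RInt (fun t => exp (-(u * sin t)) * w t) 0 PI.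

Lemma psiw_deriv w u : (forall t, continuity_pt w t) ->
  is_derive (psiw w) u (psiw (fun t => - sin t * w t) u).
Proof.
  intros Hw. unfold psiw.
  apply (param_deriv (fun z t => exp (-(z * sin t)) * w t)
                     (fun z t => exp (-(z * sin t)) * (- sin t * w t))).
  - pose proof PI_RGT_0; lra.
  - apply filter_forall. intros y t. auto_derive; auto. ring.
  - intros t _. apply continuity_2d_pt_mult; [cont2|].
    apply continuity_2d_pt_mult; [cont2|]. apply (cont2_comp w); [apply Hw|cont2].
  - intros y t. apply continuity_pt_mult; [|apply Hw].
    apply cont_of_deriv. auto_derive. auto.
Qed.

Lemma ex_RInt_cont (g : R -> R) a b : (forall t, continuity_pt g t) -> ex_RInt g a b.
Proof.
  intros H. apply (ex_RInt_continuous (V:=R_CompleteNormedModule)). intros z _.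
  apply continuity_pt_filterlim. apply H.
Qed.

Lemma cont_psiw_integrand w u : (forall t, continuity_pt w t) ->
  forall t, continuity_pt (fun t => exp (-(u * sin t)) * w t) t.
Proof.
  intros Hw t. apply continuity_pt_mult; [|apply Hw]. apply cont_of_deriv. auto_derive. auto.
Qed.

Lemma Rabs_split x c : Rabs x <= c -> -c <= x <= c.
Proof. unfold Rabs. destruct (Rcase_abs x); lra. Qed.

Lemma e1 v : 0 <= v -> Rabs (exp (-v) - 1) <= v.
Proof.
  intros Hv. pose proof (exp_ineq1_le (-v)). pose proof (exp_le1 (-v) ltac:(lra)).
  apply Rabs_le. lra.
Qed.

Lemma e2 v : 0 <= v -> Rabs (exp (-v) - 1 + v) <= v ^ 2.
Proof.
  intros Hv. pose proof (exp_ineq1_le (-v)).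
  destruct (MVT_gen (fun z => exp (-z) - 1 + z) 0 v (fun z => 1 - exp (-z))) as [c [Hc Heq]].
  - intros x _. auto_derive; auto. ring.
  - intros x _. apply cont_of_deriv. auto_derive. auto.
  - rewrite Rmin_left, Rmax_right in Hc by lra.
    rewrite Ropp_0, exp_0 in Heq.
    pose proof (e1 c ltac:(lra)). apply Rabs_split in H0.
    assert ((1 - exp (- c)) * (v - 0) <= v * v) by (pose proof (exp_le1 (-c) ltac:(lra)); apply Rmult_le_compat; lra).
    assert (0 <= (1 - exp (- c)) * (v - 0)) by (pose proof (exp_le1 (-c) ltac:(lra)); apply Rmult_le_pos; lra).
    apply Rabs_le. simpl. lra.
Qed.

Lemma e3 v : 0 <= v -> Rabs (exp (-v) - 1 + v - v^2/2) <= v ^ 3.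
Proof.
  intros Hv.
  destruct (MVT_gen (fun z => exp (-z) - 1 + z - z^2/2) 0 v (fun z => - (exp (-z) - 1 + z))) as [c [Hc Heq]].
  - intros x _. auto_derive; auto. field.
  - intros x _. apply cont_of_deriv. auto_derive. auto.
  - rewrite Rmin_left, Rmax_right in Hc by lra.
    rewrite Ropp_0, exp_0 in Heq.
    pose proof (e2 c ltac:(lra)). apply Rabs_split in H.
    replace (v - 0) with v in Heq by ring.
    replace (exp (- v) - 1 + v - v ^ 2 / 2) with (- (exp (- c) - 1 + c) * v) by (rewrite <- Heq; field).
    rewrite Rabs_mult, Rabs_Ropp. rewrite (Rabs_pos_eq v) by lra.
    apply Rle_trans with (c ^ 2 * v).
    + apply Rmult_le_compat_r; [lra|]. apply Rabs_le. lra.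
    + simpl. assert (c * c <= v * v) by nra. nra.
Qed.


Lemma sin_2nPI n : sin (2 * INR n * PI) = 0.
Proof. replace (2 * INR n * PI) with (0 + 2 * INR n * PI) by ring. rewrite sin_period. apply sin_0. Qed.
Lemma cos_2nPI_PI n : cos (2 * INR n * PI + PI) = -1.
Proof. replace (2 * INR n * PI + PI) with (PI + 2 * INR n * PI) by ring. rewrite cos_period. apply cos_PI. Qed.
Lemma cos_2nPI_mPI n : cos (2 * INR n * PI - PI) = -1.
Proof. replace (2 * INR n * PI - PI) with (- PI + 2 * INR n * PI) by ring. rewrite cos_period, cos_neg. apply cos_PI. Qed.

Lemma FTC (F f : R -> R) a b : (forall t, is_derive F t (f t)) -> (forall t, continuity_pt f t) ->
  is_RInt f a b (F b - F a).
Proof.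
  intros HF Hf. apply (is_RInt_derive (V:=R_CompleteNormedModule)).
  - intros; apply HF.
  - intros; apply continuity_pt_filterlim, Hf.
Qed.

Lemma FTC' (F f : R -> R) a b v : (forall t, is_derive F t (f t)) -> (forall t, continuity_pt f t) ->
  F b - F a = v -> is_RInt f a b v.
Proof. intros H1 H2 <-. apply FTC; auto. Qed.

Lemma I0 n : (1 <= n)%nat -> is_RInt (fun t => cos (2 * INR n * t)) 0 PI 0.
Proof.
  intros Hn. assert (Hm : 1 <= INR n) by (apply (le_INR 1); lia).
  apply (FTC' (fun t => sin (2 * INR n * t) / (2 * INR n))).
  - intros t. auto_derive; auto. field. lra.
  - intros t. apply cont_of_deriv; auto_derive; auto.
  - simpl. rewrite sin_2nPI, Rmult_0_r, sin_0. field. lra.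
Qed.

Definition kap n := / (2 * INR n - 1) - / (2 * INR n + 1).

Lemma I1 n : (1 <= n)%nat -> is_RInt (fun t => sin t * cos (2 * INR n * t)) 0 PI (- kap n).
Proof.
  intros Hn. assert (Hm : 1 <= INR n) by (apply (le_INR 1); lia).
  set (F := fun t => (cos (2 * INR n * t - t) / (2 * INR n - 1) - cos (2 * INR n * t + t) / (2 * INR n + 1)) / 2).
  apply (FTC' F).
  - intros t. unfold F. auto_derive; [repeat split; lra|].
      rewrite !sin_plus, sin_neg, cos_neg. field. lra.
  - intros t. apply cont_of_deriv; auto_derive; auto.
  - unfold F, kap. rewrite cos_2nPI_PI, cos_2nPI_mPI. rewrite !Rmult_0_r, Rminus_0_r, Rplus_0_r, cos_0. field. lra.
Qed.

Lemma I2 n : (2 <= n)%nat -> is_RInt (fun t => sin t ^ 2 * cos (2 * INR n * t)) 0 PI 0.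
Proof.
  intros Hn. assert (Hm : 2 <= INR n) by (apply (le_INR 2); lia).
  set (F := fun t => sin (2 * INR n * t) / (4 * INR n) - sin (2 * INR n * t + 2 * t) / (8 * (INR n + 1))
                     - sin (2 * INR n * t - 2 * t) / (8 * (INR n - 1))).
  apply (FTC' F).
  - intros t. unfold F. auto_derive; [repeat split; lra|].
      rewrite !cos_plus, Ropp_mult_distr_r, cos_neg, sin_neg, cos_2a_sin, sin_2a. field. lra.
  - intros t. apply cont_of_deriv; auto_derive; auto.
  - unfold F. rewrite !Rmult_0_r, Rplus_0_r, Rminus_0_r, sin_0, sin_2nPI.
    replace (2 * INR n * PI + 2 * PI) with (2 * INR (S n) * PI) by (rewrite S_INR; ring).
    replace (2 * INR n * PI - 2 * PI) with (2 * INR (pred n) * PI).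
    2:{ destruct n; [lia|]. simpl pred. rewrite S_INR. ring. }
    rewrite !sin_2nPI. field. lra.
Qed.


Lemma is_RInt_plusR (f g : R -> R) a b If Ig : is_RInt f a b If -> is_RInt g a b Ig ->
  is_RInt (fun t => f t + g t) a b (If + Ig).
Proof. intros H1 H2. exact (is_RInt_plus _ _ _ _ _ _ H1 H2). Qed.
Lemma is_RInt_minusR (f g : R -> R) a b If Ig : is_RInt f a b If -> is_RInt g a b Ig ->
  is_RInt (fun t => f t - g t) a b (If - Ig).
Proof. intros H1 H2. exact (is_RInt_minus _ _ _ _ _ _ H1 H2). Qed.
Lemma is_RInt_scalR (f : R -> R) a b k If : is_RInt f a b If ->
  is_RInt (fun t => k * f t) a b (k * If).
Proof. intros H1. exact (is_RInt_scal _ _ _ k _ H1). Qed.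

Lemma psiw_is (w : R -> R) u : (forall t, continuity_pt w t) ->
  is_RInt (fun t => exp (-(u * sin t)) * w t) 0 PI (psiw w u).
Proof.
  intros Hw. apply (RInt_correct (V:=R_CompleteNormedModule)). apply ex_RInt_cont.
  apply cont_psiw_integrand. exact Hw.
Qed.

Lemma bound_is (g : R -> R) v M : is_RInt g 0 PI v -> (forall t, 0 <= t <= PI -> Rabs (g t) <= M) ->
  Rabs v <= PI * M.
Proof.
  intros Hi Hb. rewrite <- (is_RInt_unique _ _ _ _ Hi).
  replace (PI * M) with ((PI - 0) * M) by ring.
  apply abs_RInt_le_const; auto.
  - pose proof PI_RGT_0; lra.
  - eexists; exact Hi.
Qed.

Ltac req := match goal with |- ?a = ?b => change (@eq R a b) end.

Definition cN n t := cos (2 * INR n * t).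
Definition w1 n t := - sin t * cN n t.
Definition w2 n t := - sin t * w1 n t.

Lemma cont_cN n t : continuity_pt (cN n) t.
Proof. apply cont_of_deriv. unfold cN. auto_derive. auto. Qed.
Lemma cont_w1 n t : continuity_pt (w1 n) t.
Proof. apply cont_of_deriv. unfold w1, cN. auto_derive. auto. Qed.
Lemma cont_w2 n t : continuity_pt (w2 n) t.
Proof. apply cont_of_deriv. unfold w2, w1, cN. auto_derive. auto. Qed.

Lemma sin_0_1 t : 0 <= t <= PI -> 0 <= sin t <= 1.
Proof. intros H. split; [apply sin_ge_0; lra | apply SIN_bound]. Qed.

Lemma exp_neg_le1 u t : 0 <= u -> 0 <= t <= PI -> 0 < exp (-(u * sin t)) <= 1.
Proof.
  intros Hu Ht. split; [apply exp_pos|]. apply exp_le1.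
  pose proof (sin_0_1 t Ht). assert (0 <= u * sin t) by (apply Rmult_le_pos; lra). lra.
Qed.

Lemma B1 n u : 0 <= u -> Rabs (psiw (w1 n) u) <= PI.
Proof.
  intros Hu. rewrite <- (Rmult_1_r PI). apply (bound_is _ _ _ (psiw_is _ u (cont_w1 n))).
  intros t Ht. pose proof (exp_neg_le1 u t Hu Ht). pose proof (sin_0_1 t Ht).
  pose proof (Rabs_cos_le1 (2 * INR n * t)).
  unfold w1, cN. rewrite !Rabs_mult, Rabs_Ropp, (Rabs_pos_eq (exp _)), (Rabs_pos_eq (sin t)) by lra.
  assert (0 <= Rabs (cos (2 * INR n * t))) by apply Rabs_pos.
  assert (sin t * Rabs (cos (2 * INR n * t)) <= 1) by nra. nra.
Qed.

Lemma B2 n u : (1 <= n)%nat -> 0 <= u -> Rabs (psiw (cN n) u) <= PI * u.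
Proof.
  intros Hn Hu.
  assert (Hi : is_RInt (fun t => (exp (-(u * sin t)) - 1) * cN n t) 0 PI (psiw (cN n) u - 0)).
  { eapply is_RInt_ext; [|apply is_RInt_minusR; [apply psiw_is, cont_cN | apply (I0 n Hn)]].
    intros t _. unfold cN. req. ring. }
  rewrite Rminus_0_r in Hi. apply (bound_is _ _ _ Hi).
  intros t Ht. pose proof (sin_0_1 t Ht). pose proof (Rabs_cos_le1 (2 * INR n * t)).
  assert (0 <= u * sin t <= u) by (split; [apply Rmult_le_pos|]; nra).
  pose proof (e1 (u * sin t) ltac:(lra)).
  rewrite Rabs_mult. unfold cN.
  assert (0 <= Rabs (cos (2 * INR n * t))) by apply Rabs_pos.
  assert (0 <= Rabs (exp (- (u * sin t)) - 1)) by apply Rabs_pos.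
  apply Rle_trans with (u * 1); [apply Rmult_le_compat; lra | lra].
Qed.

Lemma B3 n u : (2 <= n)%nat -> 0 <= u -> Rabs (kap n - psiw (w1 n) u) <= PI * u ^ 2.
Proof.
  intros Hn Hu.
  assert (Hi : is_RInt (fun t => sin t * (exp (-(u * sin t)) - 1 + u * sin t) * cN n t) 0 PI
                 (-1 * psiw (w1 n) u - (- kap n) + u * 0)).
  { eapply is_RInt_ext.
    2:{ apply is_RInt_plusR; [apply is_RInt_minusR|].
        - apply is_RInt_scalR with (k := -1). apply psiw_is, cont_w1.
        - apply (I1 n). lia.
        - apply is_RInt_scalR. apply (I2 n Hn). }
    intros t _. unfold w1, cN. req. ring. }
  replace (-1 * psiw (w1 n) u - - kap n + u * 0) with (kap n - psiw (w1 n) u) in Hi by ring.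
  apply (bound_is _ _ _ Hi).
  intros t Ht. pose proof (sin_0_1 t Ht). pose proof (Rabs_cos_le1 (2 * INR n * t)).
  assert (0 <= u * sin t <= u) by (split; [apply Rmult_le_pos|]; nra).
  pose proof (e2 (u * sin t) ltac:(lra)).
  replace (- (u * sin t)) with (- (u * sin t)) by ring.
  rewrite !Rabs_mult. unfold cN. rewrite (Rabs_pos_eq (sin t)) by lra.
  assert (0 <= Rabs (cos (2 * INR n * t))) by apply Rabs_pos.
  assert (0 <= Rabs (exp (- (u * sin t)) - 1 + u * sin t)) by apply Rabs_pos.
  assert ((u * sin t) ^ 2 <= u ^ 2) by (simpl; nra).
  assert (Rabs (exp (- (u * sin t)) - 1 + u * sin t) <= u ^ 2) by lra.
  assert (sin t * Rabs (exp (- (u * sin t)) - 1 + u * sin t) <= u ^ 2) by nra.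
  nra.
Qed.

Lemma B4 n u : (2 <= n)%nat -> 0 <= u -> Rabs (u * kap n - psiw (cN n) u) <= PI * u ^ 3.
Proof.
  intros Hn Hu.
  assert (Hi : is_RInt (fun t => - ((exp (-(u * sin t)) - 1 + u * sin t - (u * sin t) ^ 2 / 2) * cN n t)) 0 PI
                 (-1 * psiw (cN n) u + 0 - u * (- kap n) + (u ^ 2 / 2) * 0)).
  { eapply is_RInt_ext.
    2:{ apply is_RInt_plusR; [apply is_RInt_minusR; [apply is_RInt_plusR|]|].
        - apply is_RInt_scalR with (k := -1). apply psiw_is, cont_cN.
        - apply (I0 n). lia.
        - apply is_RInt_scalR. apply (I1 n). lia.
        - apply is_RInt_scalR. apply (I2 n Hn). }
    intros t _. unfold cN. req. field. }
  replace (-1 * psiw (cN n) u + 0 - u * - kap n + u ^ 2 / 2 * 0) with (u * kap n - psiw (cN n) u) in Hi by ring.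
  apply (bound_is _ _ _ Hi).
  intros t Ht. pose proof (sin_0_1 t Ht). pose proof (Rabs_cos_le1 (2 * INR n * t)).
  assert (0 <= u * sin t <= u) by (split; [apply Rmult_le_pos|]; nra).
  pose proof (e3 (u * sin t) ltac:(lra)).
  rewrite Rabs_Ropp, Rabs_mult. unfold cN.
  assert (0 <= Rabs (cos (2 * INR n * t))) by apply Rabs_pos.
  assert ((u * sin t) ^ 3 <= u ^ 3).
  { apply pow_incr. lra. }
  apply Rle_trans with (u ^ 3 * 1); [apply Rmult_le_compat; try lra; apply Rabs_pos | lra].
Qed.

Lemma B5 n u : (1 <= n)%nat -> 0 <= u -> 0 <= u * kap n - psiw (cN n) u.
Proof.
  intros Hn Hu. destruct n as [|p]; [lia|].
  pose proof (keyA p u Hu).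
  unfold psiw, cN. unfold kap.
  replace (2 * INR (S p) - 1) with (INR (S (2 * p))) by (rewrite !S_INR, mult_INR; simpl; ring).
  replace (2 * INR (S p) + 1) with (INR (S (S (S (2 * p))))) by (rewrite !S_INR, mult_INR; simpl; ring).
  lra.
Qed.


Definition H0 n b x := (2 * b * x * kap n - psiw (cN n) (2 * b * x)) / b ^ 2.
Definition H1 n b x := (2 * b * kap n - 2 * b * psiw (w1 n) (2 * b * x)) / b ^ 2.
Definition H2 n b x := -4 * psiw (w2 n) (2 * b * x).

Lemma d_psi0 n u : is_derive (psiw (cN n)) u (psiw (w1 n) u).
Proof. exact (psiw_deriv (cN n) u (cont_cN n)). Qed.
Lemma d_psi1 n u : is_derive (psiw (w1 n)) u (psiw (w2 n) u).
Proof. exact (psiw_deriv (w1 n) u (cont_w1 n)). Qed.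
Lemma d_psi2 n u : ex_derive (psiw (w2 n)) u.
Proof. eexists. exact (psiw_deriv (w2 n) u (cont_w2 n)). Qed.

Lemma dH0 n b x : b <> 0 -> is_derive (H0 n b) x (H1 n b x).
Proof.
  intros Hb. unfold H0, H1. auto_derive.
  - eexists. apply d_psi0.
  - replace (Derive (fun x0 : R => psiw (cN n) x0) (2 * b * x)) with (psiw (w1 n) (2 * b * x)) by (symmetry; apply is_derive_unique; apply d_psi0). field. auto.
Qed.

Lemma dH1 n b x : b <> 0 -> is_derive (H1 n b) x (H2 n b x).
Proof.
  intros Hb. unfold H1, H2. auto_derive.
  - eexists. apply d_psi1.
  - replace (Derive (fun x0 : R => psiw (w1 n) x0) (2 * b * x)) with (psiw (w2 n) (2 * b * x)) by (symmetry; apply is_derive_unique; apply d_psi1). field. auto.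
Qed.

Lemma cH2 n b x : continuity_pt (H2 n b) x.
Proof. apply cont_of_deriv. unfold H2. auto_derive. apply d_psi2. Qed.
Lemma cH0 n b x : b <> 0 -> continuity_pt (H0 n b) x.
Proof. intros Hb. apply cont_of_deriv. eexists. apply dH0. auto. Qed.

Lemma H0_nonneg n b x : (1 <= n)%nat -> 0 < b -> 0 <= x -> 0 <= H0 n b x.
Proof.
  intros Hn Hb Hx. unfold H0. unfold Rdiv. apply Rmult_le_pos.
  - pose proof (B5 n (2 * b * x) Hn ltac:(nra)). lra.
  - apply Rlt_le, Rinv_0_lt_compat. nra.
Qed.

Definition Bf n b (f : R -> R) x := f x * H1 n b x - Derive f x * H0 n b x.

Lemma IBP n b (f : R -> R) eps T I :
  (1 <= n)%nat -> 0 < b ->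
  (forall x, 0 < x -> ex_derive f x) ->
  (forall x, 0 < x -> ex_derive (Derive f) x) ->
  (forall x, 0 < x -> continuous (Derive_n f 2) x) ->
  (forall x, 0 < x -> 0 <= Derive_n f 2 x) ->
  0 < eps <= T ->
  is_RInt (fun x => f x * H2 n b x) eps T I ->
  Bf n b f T - Bf n b f eps <= I.
Proof.
  intros Hn Hb Hd1 Hd2 Hc2 Hconv HeT HI.
  assert (Hb0 : b <> 0) by lra.
  assert (HD : forall x, 0 < x -> is_derive (Bf n b f) x (f x * H2 n b x - Derive_n f 2 x * H0 n b x)).
  { intros x Hx. unfold Bf. auto_derive.
    - repeat split.
      + apply Hd1; auto.
      + eexists; apply dH1; auto.
      + apply Hd2; auto.
      + eexists; apply dH0; auto.
    - replace (Derive (fun x0 : R => H1 n b x0) x) with (H2 n b x)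
        by (symmetry; apply is_derive_unique; apply dH1; auto).
      replace (Derive (fun x0 : R => H0 n b x0) x) with (H1 n b x)
        by (symmetry; apply is_derive_unique; apply dH0; auto).
      change (Derive_n f 2 x) with (Derive (fun x0 : R => Derive f x0) x).
      change (Derive (fun x0 : R => f x0) x) with (Derive f x). ring. }
  assert (HC : forall x, 0 < x -> continuity_pt (fun x => Derive_n f 2 x * H0 n b x) x).
  { intros x Hx. apply continuity_pt_mult; [|apply cH0; auto].
    apply continuity_pt_filterlim. apply Hc2. auto. }
  assert (HI1 : is_RInt (fun x => f x * H2 n b x - Derive_n f 2 x * H0 n b x) eps T
                  (Bf n b f T - Bf n b f eps)).
  { apply (is_RInt_derive (V:=R_CompleteNormedModule)).
    - intros x Hx. rewrite Rmin_left, Rmax_right in Hx by lra. apply HD. lra.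
    - intros x Hx. rewrite Rmin_left, Rmax_right in Hx by lra.
      apply continuity_pt_filterlim. apply continuity_pt_minus.
      + apply continuity_pt_mult; [apply cont_of_deriv, Hd1; lra | apply cH2].
      + apply HC. lra. }
  assert (HJ : ex_RInt (fun x => Derive_n f 2 x * H0 n b x) eps T).
  { apply (ex_RInt_continuous (V:=R_CompleteNormedModule)). intros x Hx.
    rewrite Rmin_left, Rmax_right in Hx by lra.
    apply continuity_pt_filterlim. apply HC. lra. }
  assert (HJ0 : 0 <= RInt (fun x => Derive_n f 2 x * H0 n b x) eps T).
  { apply RInt_ge_0; [lra | exact HJ |]. intros x Hx.
    apply Rmult_le_pos; [apply Hconv; lra | apply H0_nonneg; auto; lra]. }
  assert (HI2 := is_RInt_plusR _ _ _ _ _ _ HI1 (RInt_correct _ _ _ HJ)).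
  assert (E : I = Bf n b f T - Bf n b f eps + RInt (fun x => Derive_n f 2 x * H0 n b x) eps T).
  { rewrite <- (is_RInt_unique _ _ _ _ HI).
    apply is_RInt_unique. eapply is_RInt_ext; [|exact HI2].
    intros x _. cbv beta. req. ring. }
  lra.
Qed.


Lemma abs_scale a y M : 0 <= a -> Rabs y <= M -> Rabs (a * y) <= a * M.
Proof. intros Ha Hy. rewrite Rabs_mult, Rabs_pos_eq by lra. apply Rmult_le_compat_l; lra. Qed.
Lemma abs_sub p q : Rabs (p - q) <= Rabs p + Rabs q.
Proof. unfold Rminus. eapply Rle_trans; [apply Rabs_triang|]. rewrite Rabs_Ropp. lra. Qed.

Lemma H1_bound n b x : 0 < b -> 0 <= x -> Rabs (H1 n b x) <= 2 * (Rabs (kap n) + PI) / b.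
Proof.
  intros Hb Hx. pose proof (B1 n (2 * b * x) ltac:(nra)).
  unfold H1. replace ((2 * b * kap n - 2 * b * psiw (w1 n) (2 * b * x)) / b ^ 2)
    with (2 / b * (kap n - psiw (w1 n) (2 * b * x))) by (field; lra).
  replace (2 * (Rabs (kap n) + PI) / b) with (2 / b * (Rabs (kap n) + PI)) by (field; lra).
  apply abs_scale; [apply Rlt_le, Rdiv_lt_0_compat; lra|].
  pose proof (abs_sub (kap n) (psiw (w1 n) (2 * b * x))). lra.
Qed.

Lemma H0_bound n b x : (1 <= n)%nat -> 0 < b -> 0 <= x -> Rabs (H0 n b x) <= 2 * (Rabs (kap n) + PI) / b * x.
Proof.
  intros Hn Hb Hx. pose proof (B2 n (2 * b * x) Hn ltac:(nra)).
  unfold H0. replace ((2 * b * x * kap n - psiw (cN n) (2 * b * x)) / b ^ 2)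
    with (/ b ^ 2 * ((2 * b * x) * kap n - psiw (cN n) (2 * b * x))) by (field; lra).
  replace (2 * (Rabs (kap n) + PI) / b * x) with (/ b ^ 2 * ((2 * b * x) * Rabs (kap n) + PI * (2 * b * x))) by (field; lra).
  apply abs_scale; [apply Rlt_le, Rinv_0_lt_compat; nra|].
  pose proof (abs_sub ((2 * b * x) * kap n) (psiw (cN n) (2 * b * x))) as Hab.
  rewrite Rabs_mult, (Rabs_pos_eq (2 * b * x)) in Hab by nra. lra.
Qed.

Lemma H1_small n b x : (2 <= n)%nat -> 0 < b -> 0 <= x -> Rabs (H1 n b x) <= 8 * PI * b * x ^ 2.
Proof.
  intros Hn Hb Hx. pose proof (B3 n (2 * b * x) Hn ltac:(nra)).
  unfold H1. replace ((2 * b * kap n - 2 * b * psiw (w1 n) (2 * b * x)) / b ^ 2)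
    with (2 / b * (kap n - psiw (w1 n) (2 * b * x))) by (field; lra).
  replace (8 * PI * b * x ^ 2) with (2 / b * (PI * (2 * b * x) ^ 2)) by (field; lra).
  apply abs_scale; [apply Rlt_le, Rdiv_lt_0_compat; lra|]. exact H.
Qed.

Lemma H0_small n b x : (2 <= n)%nat -> 0 < b -> 0 <= x -> Rabs (H0 n b x) <= 8 * PI * b * x ^ 3.
Proof.
  intros Hn Hb Hx. pose proof (B4 n (2 * b * x) Hn ltac:(nra)).
  unfold H0. replace ((2 * b * x * kap n - psiw (cN n) (2 * b * x)) / b ^ 2)
    with (/ b ^ 2 * ((2 * b * x) * kap n - psiw (cN n) (2 * b * x))) by (field; lra).
  replace (8 * PI * b * x ^ 3) with (/ b ^ 2 * (PI * (2 * b * x) ^ 3)) by (field; lra).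
  apply abs_scale; [apply Rlt_le, Rinv_0_lt_compat; nra|]. exact H.
Qed.

Lemma Bf_small n b (f : R -> R) x K : (2 <= n)%nat -> 0 < b -> 0 < x ->
  x * Rabs (f x) <= K -> x ^ 2 * Rabs (Derive f x) <= K ->
  Rabs (Bf n b f x) <= 16 * PI * b * K * x.
Proof.
  intros Hn Hb Hx Hf Hf'. unfold Bf.
  pose proof (H1_small n b x Hn Hb ltac:(lra)) as Hs1. pose proof (H0_small n b x Hn Hb ltac:(lra)) as Hs0.
  eapply Rle_trans; [apply abs_sub|]. rewrite !Rabs_mult.
  assert (HP : 0 < PI) by apply PI_RGT_0.
  assert (Ha1 : 0 <= Rabs (f x)) by apply Rabs_pos. assert (Ha2 : 0 <= Rabs (Derive f x)) by apply Rabs_pos.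
  assert (0 < 8 * PI * b * x). { apply Rmult_lt_0_compat; [|lra]. apply Rmult_lt_0_compat; lra. }
  assert (Hq1 : Rabs (f x) * Rabs (H1 n b x) <= 8 * PI * b * K * x).
  { apply Rle_trans with (Rabs (f x) * (8 * PI * b * x ^ 2)).
    - apply Rmult_le_compat_l; lra.
    - replace (Rabs (f x) * (8 * PI * b * x ^ 2)) with ((x * Rabs (f x)) * (8 * PI * b * x)) by ring.
      apply Rle_trans with (K * (8 * PI * b * x)); [apply Rmult_le_compat_r; lra | right; ring]. }
  assert (Hq2 : Rabs (Derive f x) * Rabs (H0 n b x) <= 8 * PI * b * K * x).
  { apply Rle_trans with (Rabs (Derive f x) * (8 * PI * b * x ^ 3)).
    - apply Rmult_le_compat_l; lra.
    - replace (Rabs (Derive f x) * (8 * PI * b * x ^ 3)) with ((x ^ 2 * Rabs (Derive f x)) * (8 * PI * b * x)) by ring.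
      apply Rle_trans with (K * (8 * PI * b * x)); [apply Rmult_le_compat_r; lra | right; ring]. }
  lra.
Qed.

Lemma Bf_large n b (f : R -> R) x : (1 <= n)%nat -> 0 < b -> 0 < x ->
  Rabs (Bf n b f x) <= 2 * (Rabs (kap n) + PI) / b * (Rabs (f x) + Rabs (x * Derive f x)).
Proof.
  intros Hn Hb Hx. unfold Bf.
  pose proof (H1_bound n b x Hb ltac:(lra)) as Hs1. pose proof (H0_bound n b x Hn Hb ltac:(lra)) as Hs0.
  set (C := 2 * (Rabs (kap n) + PI) / b) in *.
  assert (HC : 0 <= C) by (unfold C; apply Rmult_le_pos; [pose proof PI_RGT_0; pose proof (Rabs_pos (kap n)); lra | apply Rlt_le, Rinv_0_lt_compat; lra]).
  eapply Rle_trans; [apply abs_sub|]. rewrite !Rabs_mult, (Rabs_pos_eq x) by lra.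
  assert (Ha1 : 0 <= Rabs (f x)) by apply Rabs_pos. assert (Ha2 : 0 <= Rabs (Derive f x)) by apply Rabs_pos.
  assert (Hq1 : Rabs (f x) * Rabs (H1 n b x) <= Rabs (f x) * C) by (apply Rmult_le_compat_l; lra).
  assert (Hq2 : Rabs (Derive f x) * Rabs (H0 n b x) <= Rabs (Derive f x) * (C * x)) by (apply Rmult_le_compat_l; lra).
  nra.
Qed.


Lemma limsup_ge0 g : (forall x, 0 < x -> 0 <= g x) -> Rbar_le (Finite 0) (limsup_right0 g).
Proof.
  intros Hg. unfold limsup_right0.
  destruct (Glb_Rbar_correct (fun M : R => exists delta : R, 0 < delta /\
     Finite M = Lub_Rbar (fun y => exists x, 0 < x < delta /\ y = g x))) as [_ Hglb].
  apply Hglb. intros M [d [Hd HM]].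
  destruct (Lub_Rbar_correct (fun y => exists x, 0 < x < d /\ y = g x)) as [Hub _].
  rewrite <- HM in Hub. apply Rbar_le_trans with (Finite (g (d/2))).
  - simpl. apply Hg. lra.
  - apply Hub. exists (d/2). split; [lra|reflexivity].
Qed.

Lemma limsup_bound g : limsup_right0 g <> p_infty ->
  exists d K, 0 < d /\ forall x, 0 < x < d -> g x <= K.
Proof.
  intros Hne. unfold limsup_right0 in Hne.
  set (E := fun M : R => exists delta : R, 0 < delta /\
     Finite M = Lub_Rbar (fun y => exists x, 0 < x < delta /\ y = g x)) in *.
  destruct (Classical_Prop.classic (exists M, E M)) as [[M [d [Hd HM]]]|Hno].
  - exists d, M. split; auto. intros x Hx.
    destruct (Lub_Rbar_correct (fun y => exists x, 0 < x < d /\ y = g x)) as [Hub _].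
    rewrite <- HM in Hub. specialize (Hub (g x) (ex_intro _ x (conj Hx eq_refl))). exact Hub.
  - exfalso. apply Hne.
    destruct (Glb_Rbar_correct E) as [_ Hglb].
    specialize (Hglb p_infty). assert (Hlb : is_lb_Rbar E p_infty).
    { intros x Ex. exfalso. apply Hno. exists x. exact Ex. }
    specialize (Hglb Hlb). destruct (Glb_Rbar E); simpl in Hglb; tauto.
Qed.

Lemma limsup_hyp (f : R -> R) Cst :
  Rbar_le (Rbar_plus (limsup_right0 (fun x => x * Rabs (f x)))
                     (limsup_right0 (fun x => x ^ 2 * Rabs (Derive f x))))
          (Finite Cst) ->
  exists d K, 0 < d /\ forall x, 0 < x < d -> x * Rabs (f x) <= K /\ x ^ 2 * Rabs (Derive f x) <= K.
Proof.
  intros H.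
  assert (G1 : Rbar_le (Finite 0) (limsup_right0 (fun x => x * Rabs (f x)))).
  { apply limsup_ge0. intros x Hx. apply Rmult_le_pos; [lra|apply Rabs_pos]. }
  assert (G2 : Rbar_le (Finite 0) (limsup_right0 (fun x => x ^ 2 * Rabs (Derive f x)))).
  { apply limsup_ge0. intros x Hx. apply Rmult_le_pos; [apply pow_le; lra|apply Rabs_pos]. }
  destruct (limsup_bound (fun x => x * Rabs (f x))) as [d1 [K1 [Hd1 HK1]]].
  { intros E. rewrite E in H.
    destruct (limsup_right0 (fun x => x ^ 2 * Rabs (Derive f x))); simpl in H, G2; auto. }
  destruct (limsup_bound (fun x => x ^ 2 * Rabs (Derive f x))) as [d2 [K2 [Hd2 HK2]]].
  { intros E. rewrite E in H.
    destruct (limsup_right0 (fun x => x * Rabs (f x))); simpl in H, G1; auto. }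
  exists (Rmin d1 d2), (Rmax K1 K2). split; [apply Rmin_glb_lt; auto|].
  intros x Hx. pose proof (Rmin_l d1 d2). pose proof (Rmin_r d1 d2).
  pose proof (Rmax_l K1 K2). pose proof (Rmax_r K1 K2).
  split; [pose proof (HK1 x ltac:(lra)) | pose proof (HK2 x ltac:(lra))]; lra.
Qed.


Lemma cont_gen (g : R -> R) t : ex_derive g t -> continuity_pt g t.
Proof. intros H. apply continuity_pt_filterlim. apply (ex_derive_continuous (V:=R_NormedModule)). exact H. Qed.

Definition Rek (k : nat) (y : R) := RInt (fun t => exp (-2 * y * sin t) * cos (2 * INR k * t)) 0 PI.
Definition Imk (k : nat) (y : R) := RInt (fun t => exp (-2 * y * sin t) * sin (2 * INR k * t)) 0 PI.

Lemma ex_RInt_d (g : R -> R) a b : (forall t, ex_derive g t) -> ex_RInt g a b.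
Proof.
  intros H. apply (ex_RInt_continuous (V:=R_CompleteNormedModule)). intros z _.
  apply (ex_derive_continuous (V:=R_NormedModule)). apply H.
Qed.

Lemma Imk_0 k y : Imk k y = 0.
Proof.
  unfold Imk.
  set (g := fun t => exp (-2 * y * sin t) * sin (2 * INR k * t)).
  assert (Hex : ex_RInt g 0 PI) by (apply ex_RInt_d; intros; unfold g; auto_derive; auto).
  assert (E := RInt_comp_lin g (-1) PI 0 PI).
  replace (-1 * 0 + PI) with PI in E by ring.
  replace (-1 * PI + PI) with 0 in E by ring.
  specialize (E (ex_RInt_swap _ _ _ Hex)).
  rewrite (RInt_ext _ (fun y0 => g y0)) in E.
  2:{ intros x _. unfold g.
      replace (2 * INR k * (-1 * x + PI)) with (- (2 * INR k * x) + 2 * INR k * PI) by ring.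
      rewrite sin_period, sin_neg.
      replace (-1 * x + PI) with (PI - x) by ring. rewrite sin_PI_x.
      unfold scal; simpl. unfold mult; simpl. ring. }
  rewrite <- (opp_RInt_swap _ _ _ Hex) in E. unfold opp in E; simpl in E. change (RInt (fun y0 : R => g y0) 0 PI) with (RInt g 0 PI) in E. lra.
Qed.

Lemma phi_eq k y : phi k y = (Rek k y, 0).
Proof.
  rewrite <- (Imk_0 k y). unfold phi.
  apply (is_RInt_unique (V:=C_R_CompleteNormedModule)).
  apply (is_RInt_fct_extend_pair (U:=R_NormedModule) (V:=R_NormedModule)).
  - eapply is_RInt_ext; [|apply (RInt_correct (V:=R_CompleteNormedModule)); apply ex_RInt_d].
    + intros t _. simpl. ring.
    + intros t. auto_derive. auto.
  - eapply is_RInt_ext; [|apply (RInt_correct (V:=R_CompleteNormedModule)); apply ex_RInt_d].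
    + intros t _. simpl. ring.
    + intros t. auto_derive. auto.
Qed.

Lemma proj_fst (g : R -> C) F G (FF : Filter F) (FG : Filter G) l :
  is_RInt_gen (V:=C_R_NormedModule) g F G l ->
  is_RInt_gen (V:=R_NormedModule) (fun x => fst (g x)) F G (fst l).
Proof.
  intros H P [eps HP].
  assert (HP' : locally l (fun z : C => P (fst z))).
  { exists eps. intros z [Hz1 Hz2]. apply HP. exact Hz1. }
  specialize (H _ HP').
  unfold filtermapi in *. eapply filter_imp; [|exact H].
  intros ab [y [Hy Py]]. exists (fst y). split; [|exact Py].
  apply (is_RInt_fct_extend_fst (U:=R_NormedModule) (V:=R_NormedModule)). exact Hy.
Qed.

Lemma proj_snd (g : R -> C) F G (FF : Filter F) (FG : Filter G) l :
  is_RInt_gen (V:=C_R_NormedModule) g F G l ->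
  is_RInt_gen (V:=R_NormedModule) (fun x => snd (g x)) F G (snd l).
Proof.
  intros H P [eps HP].
  assert (HP' : locally l (fun z : C => P (snd z))).
  { exists eps. intros z [Hz1 Hz2]. apply HP. exact Hz2. }
  specialize (H _ HP').
  unfold filtermapi in *. eapply filter_imp; [|exact H].
  intros ab [y [Hy Py]]. exists (snd y). split; [|exact Py].
  apply (is_RInt_fct_extend_snd (U:=R_NormedModule) (V:=R_NormedModule)). exact Hy.
Qed.

Definition FA := at_right 0.
Definition FB := Rbar_locally p_infty.

Lemma lam_re f b k l : lam_is f b k l ->
  is_RInt_gen (V:=R_NormedModule) (fun x => 2 * f x * Rek k (b * x)) FA FB (fst l).
Proof.
  intros H. apply proj_fst in H; try apply filter_filter'; try (apply Proper_StrongProper; first [apply at_right_proper_filter | apply Rbar_locally_filter]).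
  - eapply is_RInt_gen_ext; [|exact H]. apply filter_forall. intros [a c] x _.
    rewrite phi_eq. unfold Cmult, RtoC. simpl. ring.
Qed.

Lemma lam_im f b k l : lam_is f b k l -> snd l = 0.
Proof.
  intros H. apply proj_snd in H; try apply filter_filter'; try (apply Proper_StrongProper; first [apply at_right_proper_filter | apply Rbar_locally_filter]).
  assert (H0 : is_RInt_gen (V:=R_NormedModule) (fun x => 0) (at_right 0) (Rbar_locally p_infty) (snd l)).
  { eapply is_RInt_gen_ext; [|exact H]. apply filter_forall. intros [a c] x _.
    rewrite phi_eq. unfold Cmult, RtoC. simpl. ring. }
  assert (H1 := is_RInt_gen_scal (V:=R_NormedModule) _ 0 _ H0).
  assert (PA : ProperFilter' (at_right 0)) by (apply Proper_StrongProper, at_right_proper_filter).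
  assert (PB : ProperFilter' (Rbar_locally p_infty)) by (apply Proper_StrongProper, Rbar_locally_filter).
  assert (E1 := @is_RInt_gen_unique R_CompleteNormedModule _ _ PA PB _ _ H0).
  assert (H1' : is_RInt_gen (V:=R_NormedModule) (fun x => 0) (at_right 0) (Rbar_locally p_infty) 0).
  { eapply is_RInt_gen_ext; [|replace 0 with (scal 0 (snd l)) at 2; [exact H1|]].
    - apply filter_forall. intros [a c] x _. unfold scal; simpl. unfold mult; simpl. ring.
    - unfold scal; simpl. unfold mult; simpl. ring. }
  assert (E2 := @is_RInt_gen_unique R_CompleteNormedModule _ _ PA PB _ _ H1').
  rewrite <- E1. exact E2.
Qed.

Lemma is_Rek k y : is_RInt (fun t => exp (-2 * y * sin t) * cos (2 * INR k * t)) 0 PI (Rek k y).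
Proof. apply (RInt_correct (V:=R_CompleteNormedModule)). apply ex_RInt_d. intros t. auto_derive. auto. Qed.

Lemma comb_id n y : (1 <= n)%nat ->
  Rek (n + 1) y + Rek (n - 1) y - 2 * Rek n y = -4 * psiw (w2 n) (2 * y).
Proof.
  intros Hn.
  assert (Hi := is_RInt_minusR _ _ _ _ _ _ (is_RInt_plusR _ _ _ _ _ _ (is_Rek (n+1) y) (is_Rek (n-1) y))
                  (is_RInt_scalR _ _ _ 2 _ (is_Rek n y))).
  assert (Hj := is_RInt_scalR _ _ _ (-4) _ (psiw_is (w2 n) (2 * y) (cont_w2 n))).
  rewrite <- (is_RInt_unique _ _ _ _ Hi). rewrite <- (is_RInt_unique _ _ _ _ Hj).
  apply RInt_ext. intros t _. unfold w2, w1, cN.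
  rewrite plus_INR, minus_INR by exact Hn. simpl INR.
  replace (2 * (INR n + 1) * t) with (2 * INR n * t + 2 * t) by ring.
  replace (2 * (INR n - 1) * t) with (2 * INR n * t - 2 * t) by ring.
  rewrite cos_plus, cos_minus, cos_2a_sin, sin_2a.
  replace (exp (-2 * y * sin t)) with (exp (- (2 * y * sin t))) by (f_equal; ring). req. ring.
Qed.

Lemma main_ineq n b (f : R -> R) L :
  (2 <= n)%nat -> 0 < b ->
  (forall x, 0 < x -> ex_derive f x) ->
  (forall x, 0 < x -> ex_derive (Derive f) x) ->
  (forall x, 0 < x -> continuous (Derive_n f 2) x) ->
  (forall x, 0 < x -> 0 <= Derive_n f 2 x) ->
  (exists d K, 0 < d /\ forall x, 0 < x < d -> x * Rabs (f x) <= K /\ x ^ 2 * Rabs (Derive f x) <= K) ->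
  is_lim f p_infty 0 ->
  is_lim (fun x => x * Derive f x) p_infty 0 ->
  is_RInt_gen (V:=R_NormedModule) (fun x => 2 * (f x * H2 n b x)) (at_right 0) (Rbar_locally p_infty) L ->
  0 <= L.
Proof.
  intros Hn Hb Hd1 Hd2 Hc2 Hconv [d [K [Hd HK]]] Hlf Hlf' HG.
  destruct (Rle_lt_dec 0 L) as [|HL]; [assumption|exfalso].
  set (e := - L / 2).
  assert (He : 0 < e) by (unfold e; lra).
  assert (HP : 0 < PI) by apply PI_RGT_0.
  set (K' := Rabs K + 1).
  assert (HK' : 0 < K') by (unfold K'; pose proof (Rabs_pos K); lra).
  set (c0 := 16 * PI * b * K').
  assert (Hc0 : 0 < c0) by (unfold c0; apply Rmult_lt_0_compat; [apply Rmult_lt_0_compat; [apply Rmult_lt_0_compat|]|]; lra).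
  set (d0 := Rmin (Rmin d 1) (e / 8 / c0)).
  assert (Hd0 : 0 < d0).
  { unfold d0. apply Rmin_glb_lt; [apply Rmin_glb_lt; lra|]. apply Rdiv_lt_0_compat; [lra|exact Hc0]. }
  assert (Q0 : at_right 0 (fun eps => 0 < eps < 1 /\ Rabs (Bf n b f eps) < e / 8)).
  { exists (mkposreal d0 Hd0). intros y Hy Hy0. cbn in Hy.
    unfold AbsRing_ball, abs, minus, plus, opp in Hy; simpl in Hy.
    rewrite Ropp_0, Rplus_0_r, Rabs_pos_eq in Hy by lra.
    assert (y < d) by (pose proof (Rmin_l (Rmin d 1) (e / 8 / c0)); pose proof (Rmin_l d 1); unfold d0 in Hy; lra).
    assert (y < 1) by (pose proof (Rmin_l (Rmin d 1) (e / 8 / c0)); pose proof (Rmin_r d 1); unfold d0 in Hy; lra).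
    assert (y < e / 8 / c0) by (pose proof (Rmin_r (Rmin d 1) (e / 8 / c0)); unfold d0 in Hy; lra).
    split; [lra|].
    destruct (HK y ltac:(lra)) as [HK1 HK2].
    pose proof (Rle_abs K).
    assert (HB := Bf_small n b f y K' Hn Hb Hy0 ltac:(unfold K'; lra) ltac:(unfold K'; lra)).
    fold c0 in HB.
    apply Rle_lt_trans with (c0 * y); [exact HB|].
    apply Rlt_le_trans with (c0 * (e / 8 / c0)); [apply Rmult_lt_compat_l; lra|].
    right. field. lra. }
  set (C := 2 * (Rabs (kap n) + PI) / b).
  assert (HC : 0 < C).
  { unfold C. apply Rdiv_lt_0_compat; [pose proof (Rabs_pos (kap n)); lra | exact Hb]. }
  assert (He2 : 0 < e / 16 / C) by (apply Rdiv_lt_0_compat; lra).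
  apply is_lim_spec in Hlf. apply is_lim_spec in Hlf'.
  destruct (Hlf (mkposreal _ He2)) as [M1 HM1].
  destruct (Hlf' (mkposreal _ He2)) as [M2 HM2].
  assert (Q1 : Rbar_locally p_infty (fun T => 1 < T /\ Rabs (Bf n b f T) < e / 8)).
  { exists (Rmax 1 (Rmax M1 M2)). intros T HT.
    pose proof (Rmax_l 1 (Rmax M1 M2)). pose proof (Rmax_r 1 (Rmax M1 M2)).
    pose proof (Rmax_l M1 M2). pose proof (Rmax_r M1 M2).
    specialize (HM1 T ltac:(lra)). specialize (HM2 T ltac:(lra)). simpl in HM1, HM2.
    rewrite Rminus_0_r in HM1, HM2.
    split; [lra|].
    pose proof (Bf_large n b f T ltac:(lia) Hb ltac:(lra)) as HB. fold C in HB.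
    apply Rle_lt_trans with (C * (Rabs (f T) + Rabs (T * Derive f T))); [exact HB|].
    apply Rlt_le_trans with (C * (e / 16 / C + e / 16 / C)); [apply Rmult_lt_compat_l; lra|].
    right. field. lra. }
  assert (Hloc : locally L (ball L e)) by (exists (mkposreal e He); auto).
  unfold is_RInt_gen, filterlimi, filter_le in HG.
  specialize (HG _ Hloc). unfold filtermapi in HG.
  assert (Q01 : filter_prod (at_right 0) (Rbar_locally p_infty)
     (fun ab => (0 < fst ab < 1 /\ Rabs (Bf n b f (fst ab)) < e / 8) /\
                (1 < snd ab /\ Rabs (Bf n b f (snd ab)) < e / 8))).
  { econstructor; [exact Q0 | exact Q1 | intros; simpl; auto]. }
  assert (Hall := filter_and _ _ HG Q01).
  assert (PF : ProperFilter (filter_prod (at_right 0) (Rbar_locally p_infty))).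
  { exact (@filter_prod_proper R R _ _ (at_right_proper_filter 0) (Rbar_locally_filter p_infty)). }
  destruct (@filter_ex _ _ PF _ Hall) as [[eps T] [[y [Hy Hby]] [[Heps HBe] [HT HBT]]]].
  simpl in *.
  assert (Hy2 : is_RInt (fun x => f x * H2 n b x) eps T (/ 2 * y)).
  { eapply is_RInt_ext; [|apply (is_RInt_scalR _ _ _ (/ 2) _ Hy)].
    intros x _. cbv beta. req. field. }
  pose proof (IBP n b f eps T (/ 2 * y) ltac:(lia) Hb Hd1 Hd2 Hc2 Hconv ltac:(lra) Hy2) as HI.
  unfold ball in Hby; simpl in Hby. unfold AbsRing_ball, abs, minus, plus, opp in Hby; simpl in Hby.
  apply Rlt_le, Rabs_split in HBe. apply Rlt_le, Rabs_split in HBT.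
  apply Rlt_le, Rabs_split in Hby.
  unfold e in *. lra.
Qed.

Theorem lemma3p8 (b : R) (f : R -> R) (Cst : R) :
  0 < b ->
  (* f in C^2(]0,+oo[) *)
  (forall x, 0 < x -> ex_derive f x) ->
  (forall x, 0 < x -> ex_derive (Derive f) x) ->
  (forall x, 0 < x -> continuous (Derive_n f 2) x) ->
  (* f >= 0 *)
  (forall x, 0 < x -> 0 <= f x) ->
  0 < Cst ->
  (* (1) *)
  Rbar_le (Rbar_plus (limsup_right0 (fun x => x * Rabs (f x)))
                     (limsup_right0 (fun x => x ^ 2 * Rabs (Derive f x))))
          (Finite Cst) ->
  (* (2) *)
  is_lim f p_infty 0 ->
  is_lim (fun x => x * Derive f x) p_infty 0 ->
  (* (3) *)
  (forall x, 0 < x -> 0 <= Derive_n f 2 x) ->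
  forall (n : nat), (2 <= n)%nat ->
  forall l_prev l_n l_next : C,
    lam_is f b (n - 1) l_prev -> lam_is f b n l_n -> lam_is f b (n + 1) l_next ->
    exists r : R, 0 <= r /\
      Cplus (Cplus l_next l_prev) (Copp (Cmult (RtoC 2) l_n)) = RtoC r.
Proof.
  intros Hb Hd1 Hd2 Hc2 Hf0 HC Hls Hlf Hlf' Hconv n Hn l_prev l_n l_next Hp Hm Hx.
  pose proof (lam_im _ _ _ _ Hp) as Ip. pose proof (lam_im _ _ _ _ Hm) as Im.
  pose proof (lam_im _ _ _ _ Hx) as Ix.
  apply lam_re in Hp. apply lam_re in Hm. apply lam_re in Hx.
  set (L := fst l_next + fst l_prev - 2 * fst l_n).
  assert (HG : is_RInt_gen (V:=R_NormedModule) (fun x => 2 * (f x * H2 n b x)) (at_right 0) (Rbar_locally p_infty) L).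
  { assert (H1 := is_RInt_gen_minus _ _ _ _ (is_RInt_gen_plus _ _ _ _ Hx Hp) (is_RInt_gen_scal _ 2 _ Hm)).
    eapply is_RInt_gen_ext; [|exact H1].
    apply filter_forall. intros [a c] x _.
    unfold minus, plus, opp, scal; simpl. unfold mult; simpl.
    unfold H2. replace (2 * b * x) with (2 * (b * x)) by ring.
    rewrite <- comb_id by lia. ring. }
  assert (HL : 0 <= L).
  { apply (main_ineq n b f L Hn Hb Hd1 Hd2 Hc2 Hconv (limsup_hyp f Cst Hls) Hlf Hlf' HG). }
  exists L. split; [exact HL|].
  destruct l_next as [a1 b1], l_prev as [a2 b2], l_n as [a3 b3]. simpl in *.
  subst b1 b2 b3. unfold Cplus, Copp, Cmult, RtoC, L. simpl. f_equal; ring.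
Qed.
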